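(* Let $\mathbf{F}_q$ have characteristic $p$, and let $D\subseteq\mathbf{F}_q$ with $|D|=q-1>4$. If $p$ is odd, then for every integer $k$ with $1<k<q-2$ and every $b\in\mathbf{F}_q$ there exist pairwise distinct $x_1,\dots,x_k\in D$ with $x_1+\dots+x_k=b$. If $p=2$, the same holds for every integer $k$ with $2<k<q-3$. *)

(* Defs.v *)
From HB Require Import structures.
From mathcomp Require Import all_boot all_order all_algebra all_field.
Set Implicit Arguments. Unset Strict Implicit. Unset Printing Implicit Defensive.

(* Main.v *)
Require Import Defs.
From Stdlib Require Import Lia.
From HB Require Import structures.
From mathcomp Require Import all_boot all_order all_algebra all_field.
Import GRing.Theory.
Local Open Scope ring_scope.

Ltac nlia := intros;
  repeat match goal with H : is_true (_ <= _)%N |- _ => apply (elimT leP) in H; rewrite -?plusE -?multE -?minusE in H end;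
  repeat match goal with H : (_ = _ :> nat) |- _ => revert H end;
  rewrite -?plusE -?multE -?minusE; intros;
  try (apply/leP); rewrite -?plusE -?multE -?minusE; lia.

Lemma exists_notin (T : finType) (A : {set T}) : (#|A| < #|T|)%N -> exists x, x \notin A.
Proof.
move=> h; have : ~~ ([set: T] \subset A).
  by apply/negP => /subset_leq_card; rewrite cardsT leqNgt h.
by case/subsetPn => x _ hx; exists x.
Qed.

Section S.
Variable F : finFieldType.

Lemma base2 (A : {set F}) (b : F) : (2 * #|A| + 2 <= #|F|)%N ->
  ((2%:R : F) != 0 \/ b != 0) ->
  exists S : {set F}, [/\ #|S| = 2%N, S \subset ~: A & \sum_(x in S) x = b].
Proof.
move=> hc h2.
pose C := [set x : F | x + x == b].
have hC : (#|C| <= 1)%N.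
  apply/card_le1_eqP => x y; rewrite !inE => /eqP hx /eqP hy.
  case: (eqVneq (2%:R : F) 0) => h20.
    case: h2 => h2; first by rewrite h20 eqxx in h2.
    by move: h2; rewrite -hx -mulr2n -mulr_natr h20 mulr0 eqxx.
  by apply: (mulIf h20); rewrite !mulr_natr !mulr2n hx hy.
pose B := A :|: [set b - y | y in A] :|: C.
have hB : (#|B| < #|F|)%N.
  have h1 := leq_card_setU (A :|: [set b - y | y in A]) C.
  have h3 := leq_card_setU A [set b - y | y in A].
  have h4 := leq_imset_card (fun y => b - y) A.
  rewrite /B; apply: (leq_ltn_trans h1); apply: (@leq_ltn_trans (#|A| + #|A| + 1)).
    apply: leq_add => //; apply: (leq_trans h3); exact: leq_add.
  move: hc; nlia.
case: (@exists_notin _ _ hB) => x; rewrite /B !inE !negb_or => /andP [/andP [hxA hxI] hxC].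
have hbx : b - x \notin A.
  apply/negP => hA; move/negP: hxI; apply; apply/imsetP; exists (b - x) => //.
  by rewrite opprB addrC subrK.
have hne : x != b - x.
  by apply/negP => /eqP e; move/negP: hxC; apply; rewrite {2}e addrC subrK.
exists [set x; b - x]; split.
- by rewrite cards2 hne.
- apply/subsetP => y; rewrite !inE => /orP [] /eqP ->; by rewrite ?hxA ?hbx.
- rewrite big_setU1 ?big_set1 /=; last by rewrite inE.
  by rewrite addrC subrK.
Qed.

Lemma mainlem (n : nat) : forall (A : {set F}) (b : F),
  (2 * (#|A| + n.+2) <= #|F| + 2)%N ->
  (n = 0%N -> (2%:R : F) != 0 \/ b != 0) ->
  exists S : {set F}, [/\ #|S| = n.+2, S \subset ~: A & \sum_(x in S) x = b].
Proof.
elim: n => [|n IH] A b hc h2.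
  apply: base2; last exact: h2.
  move: hc; nlia.
have hb : (#|b |: A| < #|F|)%N.
  rewrite cardsU1; move: hc; case: (b \notin A) => /=; nlia.
case: (@exists_notin _ _ hb) => x; rewrite !inE negb_or => /andP [hxb hxA].
have hc' : (2 * (#|x |: A| + n.+2) <= #|F| + 2)%N.
  rewrite cardsU1 hxA /=; move: hc; move: #|A| #|F| => a q; nlia.
have hbx : b - x != 0 by rewrite subr_eq0 eq_sym.
have [S' [hS1 hS2 hS3]] := IH (x |: A) (b - x) hc' (fun _ => or_intror hbx).
have hxS : x \notin S'.
  apply/negP => hx; move/subsetP: hS2 => /(_ x hx); by rewrite !inE eqxx.
exists (x |: S'); split.
- by rewrite cardsU1 hxS hS1.
- apply/subsetP => y; rewrite !inE => /orP [/eqP -> //|hy].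
  move/subsetP: hS2 => /(_ y hy); rewrite !inE negb_or; by case/andP.
- by rewrite big_setU1 //= hS3 addrC subrK.
Qed.

Lemma key (D : {set F}) (hD : #|D| = (#|F| - 1)%N) (k : nat) (b : F) :
  (2 <= k)%N -> (k + 3 <= #|F|)%N ->
  ((2%:R : F) != 0 \/ ((3 <= k)%N /\ (k + 4 <= #|F|)%N)) ->
  exists S : {set F}, [/\ #|S| = k, S \subset D & \sum_(x in S) x = b].
Proof.
move=> hk1 hk2 h2.
have hA : #|~: D| = 1%N.
  have := cardsC D; rewrite hD; move: hk2; move: #|~: D| #|F| => a q; nlia.
case: (leqP (2 * k) #|F|) => hkq.
  have [S [h1 h3 h4]] := mainlem (k - 2) (~: D) b
    ltac:(by rewrite hA; move: hkq hk1; move: #|F| => q; nlia)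
    (fun e => match h2 with or_introl h => or_introl h
      | or_intror (conj h _) => False_ind _ ltac:(by move: e h; nlia) end).
  by exists S; split => //; [move: h1 hk1; move: #|S| => q; nlia | rewrite setCK in h3].
have [S' [h1 h3 h4]] := mainlem (#|F| - 3 - k) (~: D) (\sum_(x in D) x - b)
    ltac:(by rewrite hA; move: hkq hk1 hk2; move: #|F| => q; nlia)
    (fun e => match h2 with or_introl h => or_introl h
      | or_intror (conj _ h) => False_ind _ ltac:(by move: e h; nlia) end).
rewrite setCK in h3.
exists (D :\: S'); split.
- rewrite cardsD (setIidPr h3) hD h1; move: hkq hk1 hk2; move: #|F| => q; nlia.
- exact: subsetDl.
- have : \sum_(x in D) x = \sum_(x in D :&: S') x + \sum_(x in D :\: S') x.
    exact: big_setID.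
  rewrite (setIidPr h3) h4 => e.
  by apply: (addrI (\sum_(x in D) x - b)); rewrite -e subrK.
Qed.

Lemma convert (D : {set F}) (k : nat) (b : F) (S : {set F}) :
  #|S| = k -> S \subset D -> \sum_(x in S) x = b ->
  exists x : 'I_k -> F,
    [/\ injective x, (forall i, x i \in D) & \sum_(i < k) x i = b].
Proof.
move=> h1 h2 h3.
have hs : size (enum S) = k by rewrite -cardE.
exists (fun i => nth 0 (enum S) i); split.
- move=> i j /eqP; rewrite nth_uniq ?hs ?enum_uniq // => /eqP; exact: val_inj.
- move=> i; apply: (subsetP h2); rewrite -mem_enum; apply: mem_nth; by rewrite hs.
- rewrite -h3.
  have -> : \sum_(x in S) x = \sum_(x <- enum S) x by rewrite big_enum.
  by rewrite (big_nth 0) hs big_mkord.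
Qed.

End S.

Theorem corollary2p8 (F : finFieldType) (p : nat) (pchar_p : p \in [pchar F])
  (D : {set F}) (hD : #|D| = (#|F| - 1)%N) (hD4 : (4 < #|D|)%N) :
  (odd p ->
     forall (k : nat) (b : F), (1 < k)%N -> (k < #|F| - 2)%N ->
       exists x : 'I_k -> F,
         [/\ injective x, (forall i, x i \in D) & \sum_(i < k) x i = b])
  /\
  (p = 2%N ->
     forall (k : nat) (b : F), (2 < k)%N -> (k < #|F| - 3)%N ->
       exists x : 'I_k -> F,
         [/\ injective x, (forall i, x i \in D) & \sum_(i < k) x i = b]).
Proof.
split.
- move=> hp k b hk1 hk2.
  have h2 : (2%:R : F) != 0.
    apply/negP => /eqP e.
    have : (2 \in [pchar F])%N by rewrite inE e eqxx.
    rewrite (pcharf_eq pchar_p) inE => /eqP ep.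
    by move: hp; rewrite -ep.
  have [S [h1 h3 h4]] := @key _ _ hD k b hk1 ltac:(by move: hk2 hD4; rewrite hD; move: #|F| => q; nlia) (or_introl h2).
  exact: (@convert _ _ _ _ _ h1 h3 h4).
- move=> hp k b hk1 hk2.
  have e1 : (k + 3 <= #|F|)%N by move: hk2 hD4; rewrite hD; move: #|F| => q; nlia.
  have e2 : (k + 4 <= #|F|)%N by move: hk2 hD4; rewrite hD; move: #|F| => q; nlia.
  have [S [h1 h3 h4]] := @key _ _ hD k b (ltnW hk1) e1 (or_intror (conj hk1 e2)).
  exact: (@convert _ _ _ _ _ h1 h3 h4).
Qed.
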